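(* Let $\mathcal{H}$ be a family of simple $r$-uniform hypergraphs and let $G$ be an $r$-uniform multihypergraph in which every edge has the same multiplicity. Then there exists a simple $r$-uniform hypergraph $G'$ with $e(G')=e(G)$ and $\operatorname{ex}(G',\mathcal{H})\leq\operatorname{ex}(G,\mathcal{H})$.
   Context: $e(\cdot)$ counts edges with multiplicity. For an $r$-uniform (multi)hypergraph $G$, $\operatorname{ex}(G,\mathcal{H})$ is the maximum number of edges (with multiplicity) of a sub-multihypergraph of $G$ (sub-multiset of its edges) that contains no member of $\mathcal{H}$ as a subgraph. *)

(* Defs.v *)
From mathcomp Require Import all_boot.
From mathcomp Require Import boolp.
Set Implicit Arguments. Unset Strict Implicit. Unset Printing Implicit Defensive.

(* An r-uniform multihypergraph on a finite vertex type V is given by its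
   multiplicity function: mult A = number of copies of the edge A. *)
Definition multihypergraph (V : finType) := {ffun {set V} -> nat}.

Definition uniform (V : finType) (r : nat) (G : multihypergraph V) : Prop :=
  forall A : {set V}, 0 < G A -> #|A| = r.

Definition simple_mhg (V : finType) (G : multihypergraph V) : Prop :=
  forall A : {set V}, G A <= 1.

Definition nedges (V : finType) (G : multihypergraph V) : nat :=
  \sum_(A : {set V}) G A.

Definition uniform_simple (W : finType) (r : nat) (E : {set {set W}}) : Prop :=
  forall e, e \in E -> #|e| = r.

Definition contains (V W : finType) (F : multihypergraph V) (E : {set {set W}})
  : Prop :=
  exists phi : W -> V, injective phi /\ forall e, e \in E -> 0 < F (phi @: e).

Definition hfamily := forall W : finType, {set {set W}} -> Prop.

Definition Hfree (V : finType) (Hs : hfamily) (F : multihypergraph V) : Prop :=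
  forall (W : finType) (E : {set {set W}}), Hs W E -> ~ contains F E.

(* Multiplicities of F are
   bounded by e(G), so F ranges over a finite type. *)
Definition ex (V : finType) (G : multihypergraph V) (Hs : hfamily) : nat :=
  \max_(F : {ffun {set V} -> 'I_(nedges G).+1} |
          `[< (forall A, (F A : nat) <= G A) /\
              Hfree Hs [ffun A => (F A : nat)] >])
     \sum_(A : {set V}) (F A : nat).

(* Main.v *)
Require Import Defs.
From mathcomp Require Import all_boot.
From mathcomp Require Import boolp.

Set Implicit Arguments. Unset Strict Implicit. Unset Printing Implicit Defensive.

Definition emb (V : finType) (m : nat) (i : 'I_m) (A : {set V}) : {set V * 'I_m} :=
  [set (v, i) | v in A].

Lemma mem_emb (V : finType) (m : nat) (i : 'I_m) (A : {set V}) x :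
  ((x, i) \in emb i A) = (x \in A).
Proof. by rewrite /emb (mem_imset (f := fun v => (v, i))) // => a b [->]. Qed.

Lemma emb_inj (V : finType) (m : nat) (i j : 'I_m) (A B : {set V}) :
  A != set0 -> emb i A = emb j B -> i = j /\ A = B.
Proof.
move=> /set0Pn [v vA] e.
have : (v, i) \in emb j B by rewrite -e mem_emb.
case/imsetP => w _ [_ eij]; subst j; split => //.
by apply/setP => x; rewrite -(mem_emb i A x) -(mem_emb i B x) e.
Qed.

Lemma card_emb (V : finType) (m : nat) (i : 'I_m) (A : {set V}) :
  #|emb i A| = #|A|.
Proof. by rewrite /emb card_imset // => a b [->]. Qed.

Lemma emb_comp (V W : finType) (m : nat) (i : 'I_m) (phi : W -> V) (e : {set W}) :
  emb i (phi @: e) = (fun w => (phi w, i)) @: e.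
Proof. by rewrite /emb -imset_comp. Qed.

Theorem proposition2p9 (r : nat) (hr : 0 < r) (Hs : hfamily)
  (hHs : forall (W : finType) (E : {set {set W}}), Hs W E -> uniform_simple r E)
  (V : finType) (G : multihypergraph V) (hG : uniform r G)
  (hmult : exists m : nat, forall A : {set V}, 0 < G A -> G A = m) :
  exists (V' : finType) (G' : multihypergraph V'),
    [/\ uniform r G', simple_mhg G', nedges G' = nedges G
      & ex G' Hs <= ex G Hs].
Proof.
case: hmult => m hm.
pose S := [set A | 0 < G A].
have Sne : forall A, A \in S -> A != set0.
  move=> A; rewrite inE => /hG hA; by rewrite -card_gt0 hA.
have nG : nedges G = #|S| * m.
  rewrite /nedges (bigID (fun A => 0 < G A)) /= [X in _ + X]big1; last first.
    by move=> A; rewrite lt0n negbK => /eqP.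
  rewrite addn0 -sum_nat_const.
  rewrite [RHS](eq_bigl (fun A => 0 < G A)); last by move=> A; rewrite inE.
  exact: eq_bigr.
pose f := fun p : 'I_m * {set V} => emb p.1 p.2.
pose D := setX [set: 'I_m] S.
have finj : {in D &, injective f}.
  move=> [i A] [j B]; rewrite in_setX => /andP [_ AS] _ e.
  have [/= eij eAB] := emb_inj (Sne _ AS) e.
  by rewrite eij eAB.
pose E' := f @: D.
pose G' : multihypergraph (V * 'I_m)%type := [ffun B => nat_of_bool (B \in E')].
exists (V * 'I_m)%type, G'; split.
- move=> B; rewrite ffunE lt0b => /imsetP [[i A]]; rewrite in_setX => /andP [_ AS] ->.
  by rewrite /f /= card_emb; apply: hG; move: AS; rewrite inE.
- by move=> B; rewrite ffunE; case: (B \in E').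
- rewrite nG /nedges (bigID (mem E')) /= [X in _ + X]big1; last first.
    by move=> B /negbTE; rewrite ffunE => ->.
  rewrite addn0 (eq_bigr (fun _ => 1)); last by move=> B BE; rewrite ffunE BE.
  by rewrite sum_nat_const muln1 card_in_imset // cardsX cardsT card_ord mulnC.
rewrite /ex; apply/bigmax_leqP => F' /asboolP [hle hfree].
have hF'1 : forall B, (F' B : nat) <= 1.
  by move=> B; apply: leq_trans (hle B) _; rewrite ffunE; case: (B \in E').
have h0 : forall B, B \notin E' -> (F' B : nat) = 0.
  by move=> B BE; apply/eqP; rewrite -leqn0; apply: leq_trans (hle B) _; rewrite ffunE (negbTE BE).
pose g := fun i : 'I_m => \sum_(A in S) (F' (emb i A) : nat).
have step1 : \sum_(B : {set V * 'I_m}) (F' B : nat) = \sum_(i : 'I_m) g i.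
  rewrite (bigID (mem E')) /= [X in _ + X]big1; last by move=> B; exact: h0.
  rewrite addn0 (big_imset _ finj) /= pair_big_dep /=.
  by apply: eq_big => [[i A]|[i A] _]; rewrite ?in_setX ?inE.
rewrite step1.
case: (posnP m) => [m0|mpos].
  by subst m; rewrite big_ord0.
have [i0 hi0] := eq_bigmax g (ltac:(by rewrite card_ord)).
have hsum : \sum_(i : 'I_m) g i <= m * g i0.
  rewrite -hi0 -[X in X * _](card_ord m) -sum_nat_const.
  by apply: leq_sum => i _; apply: leq_bigmax.
apply: leq_trans hsum _.
have GAle : forall A, G A <= nedges G.
  by move=> A; rewrite /nedges (bigD1 A) //= leq_addr.
pose F : {ffun {set V} -> 'I_(nedges G).+1} :=
  [ffun A => inord (G A * F' (emb i0 A))].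
have Fv : forall A, (F A : nat) = G A * F' (emb i0 A).
  move=> A; rewrite ffunE inordK // ltnS.
  apply: leq_trans (GAle A).
  by rewrite -{2}(muln1 (G A)) leq_mul2l hF'1 orbT.
have -> : m * g i0 = \sum_(A : {set V}) (F A : nat).
  rewrite (eq_bigr _ (fun A _ => Fv A)) (bigID (fun A => 0 < G A)) /=.
  rewrite [X in _ + X]big1; last first.
    by move=> A; rewrite lt0n negbK => /eqP ->.
  rewrite addn0 /g big_distrr /=.
  apply: eq_big => [A|A]; rewrite /S ?inE // => hA; by rewrite (hm _ hA).
apply: (leq_bigmax_cond F).
apply/asboolP; split.
  move=> A; rewrite Fv.
  by rewrite -{2}(muln1 (G A)) leq_mul2l hF'1 orbT.
move=> W E HE [phi [phiinj hphi]].
apply: (hfree W E HE); exists (fun w => (phi w, i0)); split.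
  by move=> a b [/phiinj].
move=> e eE; have := hphi e eE; rewrite ffunE Fv muln_gt0 => /andP [_].
by rewrite ffunE emb_comp.
Qed.
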